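(* Let $n\ge 4$ and let $R(F_n^1)$ be the complex Leibniz algebra with basis $\{h_1,h_2,e_1,\dots,e_n\}$ and nonzero products $[e_i,e_1]=e_{i+1}$ ($2\le i\le n-1$), $[e_1,h_2]=e_1$, $[h_2,e_1]=-e_1$, $[e_i,h_1]=e_i$ ($2\le i\le n$), $[e_i,h_2]=(i-1)e_i$ ($2\le i\le n$). A linear map $D$ on $R(F_n^1)$ is an anti-derivation iff there exist $\beta_1,\dots,\beta_{n+1},\gamma_1,\gamma_2\in\mathbb C$ with $$D(h_1)=\gamma_1h_1+\sum_{i=2}^n\beta_{i+1}e_i,\quad D(h_2)=\gamma_2h_1+\beta_2e_1+\sum_{i=2}^n(i-1)\beta_{i+1}e_i,$$ $$D(e_1)=\beta_1e_1+\sum_{i=3}^n\beta_ie_i,\quad D(e_i)=0\ (2\le i\le n).$$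
   Context: Leibniz algebras are right Leibniz over $\mathbb C$: $[x,[y,z]]=[[x,y],z]-[[x,z],y]$. Unlisted products are zero. An anti-derivation is a linear map $D$ with $D([x,y])=[D(x),y]-[D(y),x]$ for all $x,y$. *)

(* Defs.v *)
From HB Require Import structures.
From mathcomp Require Import all_boot all_order all_algebra.
From mathcomp Require Import complex.
From mathcomp Require Import Rstruct.
Set Implicit Arguments. Unset Strict Implicit. Unset Printing Implicit Defensive.
Import Order.TTheory GRing.Theory Num.Theory.
Local Open Scope ring_scope.

Notation CC := (Rdefinitions.R)[i].

(* The Leibniz algebra R(F_n^1), of dimension n+2, modelled as row vectors
   'rV[CC]_n.+2.  Coordinate 0 <-> h_1, coordinate 1 <-> h_2,
   coordinate i+1 <-> e_i (1 <= i <= n). *)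
Section Alg.
Variable n : nat.

Definition vH1 : 'rV[CC]_n.+2 := delta_mx 0 (inord 0).
Definition vH2 : 'rV[CC]_n.+2 := delta_mx 0 (inord 1).
Definition vE (i : nat) : 'rV[CC]_n.+2 := delta_mx 0 (inord i.+1).

Definition bb (a b : 'I_n.+2) : 'rV[CC]_n.+2 :=
  let i := (a : nat).-1 in
  if [&& 3 <= a, (b : nat) == 2 & i <= n.-1]%N then vE i.+1
  else if ((a : nat) == 2) && ((b : nat) == 1) then vE 1
  else if ((a : nat) == 1) && ((b : nat) == 2) then - vE 1
  else if (3 <= a)%N && ((b : nat) == 0) then vE i
  else if (3 <= a)%N && ((b : nat) == 1) then (i.-1)%:R *: vE i
  else 0.

Definition lbr (x y : 'rV[CC]_n.+2) : 'rV[CC]_n.+2 :=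
  \sum_(a < n.+2) \sum_(b < n.+2) (x 0 a * y 0 b) *: bb a b.

Definition anti_derivation (D : {linear 'rV[CC]_n.+2 -> 'rV[CC]_n.+2}) : Prop :=
  forall x y, D (lbr x y) = lbr (D x) y - lbr (D y) x.

End Alg.

(* Main.v *)
Require Import Defs.
From HB Require Import structures.
From mathcomp Require Import all_boot all_order all_algebra complex Rstruct zify ring.
Import GRing.Theory.
Local Open Scope ring_scope.

Lemma vE_entry n (i : nat) (j : 'I_n.+2) : (i < n.+1)%N ->
  (vE n i) 0 j = (j == i.+1 :> nat)%:R.
Proof. by move=> hi; rewrite mxE eqxx /= -val_eqE /= inordK. Qed.

Lemma lbr_delta_r n (x : 'rV[CC]_n.+2) b :
  lbr x (delta_mx 0 b) = \sum_a x 0 a *: bb a b.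
Proof.
rewrite /lbr; apply eq_bigr => a _; rewrite (bigD1 b) //= big1 ?addr0.
  by rewrite mxE !eqxx mulr1.
by move=> b' nb; rewrite mxE eqxx /= (negbTE nb) mulr0 scale0r.
Qed.

Lemma e01 : (0%N == 1 :> nat) = false. Proof. by []. Qed.
Lemma e02 : (0%N == 2 :> nat) = false. Proof. by []. Qed.
Lemma e00 : (0%N == 0 :> nat) = true. Proof. by []. Qed.
Lemma e10 : (1%N == 0 :> nat) = false. Proof. by []. Qed.
Lemma e12 : (1%N == 2 :> nat) = false. Proof. by []. Qed.
Lemma e11 : (1%N == 1 :> nat) = true. Proof. by []. Qed.
Lemma e20 : (2%N == 0 :> nat) = false. Proof. by []. Qed.
Lemma e21 : (2%N == 1 :> nat) = false. Proof. by []. Qed.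
Lemma e22 : (2%N == 2 :> nat) = true. Proof. by []. Qed.
Definition eE := (e00,e01,e02,e10,e11,e12,e20,e21,e22).

Lemma bb0E n (a b j : 'I_n.+2) : (b : nat) = 0%N -> (bb a b) 0 j = ((3 <= a)%N && (j == a :> nat))%:R.
Proof.
move=> hb; rewrite /bb hb !eE !andbF !andbT /=.
case: (ltnP 2 a) => ha /=; last by rewrite mxE.
have ao := ltn_ord a; rewrite vE_entry; last by lia.
by rewrite prednK //; lia.
Qed.

Lemma bb1E n (a b j : 'I_n.+2) : (b : nat) = 1%N -> (bb a b) 0 j =
  if (a == 2 :> nat) then (j == 2 :> nat)%:R
  else if (3 <= a)%N then (a.-2)%:R * (j == a :> nat)%:R else 0.
Proof.
move=> hb; rewrite /bb hb !eE !andbF !andbT /=.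
have ao := ltn_ord a.
case: ifP => a2.
  by rewrite vE_entry //; lia.
case: (ltnP 2 a) => ha /=; last by rewrite mxE.
rewrite mxE vE_entry; last by lia.
by rewrite prednK //; lia.
Qed.

Lemma bb2E n (a b j : 'I_n.+2) : (0 < n)%N -> (b : nat) = 2%N -> (bb a b) 0 j =
  if (3 <= a)%N && (a <= n)%N then (j == a.+1 :> nat)%:R
  else if (a == 1 :> nat) then - (j == 2 :> nat)%:R else 0.
Proof.
move=> n0 hb; rewrite /bb hb !eE !andbF !andbT /=.
have ao := ltn_ord a.
case: (ltnP 2 a) => ha /=.
  have -> : (a.-1 <= n.-1)%N = (a <= n)%N by lia.
  case: ifP => an.
    by rewrite vE_entry; [congr (_%:R); congr (_ == _); lia | lia].
  have -> : (a == 1 :> nat) = false by lia.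
  by rewrite mxE.
case: ifP => a1; last by rewrite mxE.
by rewrite mxE vE_entry.
Qed.

Lemma bbbig n (a b : 'I_n.+2) : (3 <= b)%N -> bb a b = 0.
Proof.
move=> hb; rewrite /bb.
have -> : ((b:nat) == 2) = false by lia.
have -> : ((b:nat) == 1) = false by lia.
have -> : ((b:nat) == 0) = false by lia.
by rewrite !andbF.
Qed.

Lemma sum_ind N (f c : 'I_N -> CC) (j : 'I_N) :
  (forall a, a != j -> c a = 0) -> \sum_a f a * c a = f j * c j.
Proof.
move=> hc; rewrite (bigD1 j) //= big1 ?addr0 // => a ha.
by rewrite hc ?mulr0.
Qed.

Lemma lbrE n (x : 'rV[CC]_n.+2) b j :
  (lbr x (delta_mx 0 b)) 0 j = \sum_a x 0 a * (bb a b) 0 j.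
Proof. by rewrite lbr_delta_r summxE; apply eq_bigr => a _; rewrite mxE. Qed.

Lemma lbr0E n (x : 'rV[CC]_n.+2) (b j : 'I_n.+2) : (b : nat) = 0%N ->
  (lbr x (delta_mx 0 b)) 0 j = if (3 <= j)%N then x 0 j else 0.
Proof.
move=> hb; rewrite lbrE.
under eq_bigr do rewrite bb0E //.
rewrite (@sum_ind _ _ _ j); last first.
  by move=> a ha; rewrite eq_sym val_eqE (negbTE ha) andbF.
by rewrite eqxx andbT; case: ifP; rewrite ?mulr1 ?mulr0.
Qed.

Lemma lbr1E n (x : 'rV[CC]_n.+2) (b j : 'I_n.+2) : (b : nat) = 1%N ->
  (lbr x (delta_mx 0 b)) 0 j =
  if (j == 2%N :> nat) then x 0 j else if (3 <= j)%N then (j.-2)%:R * x 0 j else 0.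
Proof.
move=> hb; rewrite lbrE.
under eq_bigr do rewrite bb1E //.
rewrite (@sum_ind _ _ _ j); last first.
  move=> a ha; have ha' : (a == j :> nat) = false by apply/negbTE.
  case: ifP => a2; first by rewrite (_ : (j == 2 :> nat) = false) //; lia.
  by case: ifP; rewrite // eq_sym ha' mulr0.
rewrite eqxx; case: ifP => j2; first by rewrite j2 mulr1.
by case: ifP => _; rewrite /= ?mulr1 ?mulr0 // mulrC.
Qed.

Lemma inordE n (k : nat) : (k < n.+1)%N -> ((inord k : 'I_n.+1) : nat) = k.
Proof. exact: inordK. Qed.

Lemma lbr2E n (x : 'rV[CC]_n.+2) (b j : 'I_n.+2) : (0 < n)%N -> (b : nat) = 2%N ->
  (lbr x (delta_mx 0 b)) 0 j =
  if (j == 2%N :> nat) then - x 0 (inord 1%N) else if (4 <= j)%N then x 0 (inord j.-1) else 0.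
Proof.
move=> n0 hb; rewrite lbrE.
under eq_bigr do rewrite bb2E //.
have jo := ltn_ord j.
case: ifP => j2.
  rewrite (@sum_ind _ _ _ (inord 1)); last first.
    move=> a ha; have ao := ltn_ord a.
    have ha' : (a == 1 :> nat) = false.
      apply/negP => /eqP a1; move: ha; rewrite -val_eqE /= a1 inordE //; lia.
    case: ifP => h; first by rewrite (_ : (j == a.+1 :> nat) = false) //; lia.
    by rewrite ha'.
  rewrite inordE //=.
  by rewrite mulrN mulr1.
case: ifP => j4.
  rewrite (@sum_ind _ _ _ (inord j.-1)); last first.
    move=> a ha; have ao := ltn_ord a.
    have ha' : (j == a.+1 :> nat) = false.
      apply/negP => /eqP a1; move: ha; rewrite -val_eqE /= a1 inordE //=; lia.
    by rewrite ha' /= ?j2 /= ?oppr0 ?mulr0n ?oppr0 ?if_same.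
  rewrite inordE; last by lia.
  rewrite (_ : (3 <= j.-1)%N && (j.-1 <= n)%N) ?prednK ?eqxx ?mulr1 //; lia.
rewrite big1 // => a _.
case: ifP => h; first by rewrite (_ : (j == a.+1 :> nat) = false) ?mulr0 //; lia.
by rewrite /= ?j2 /= ?mulr0n ?oppr0 ?if_same ?mulr0.
Qed.

Lemma lbrbig n (x : 'rV[CC]_n.+2) (b : 'I_n.+2) : (3 <= b)%N ->
  lbr x (delta_mx 0 b) = 0.
Proof.
by move=> hb; rewrite lbr_delta_r big1 // => a _; rewrite bbbig // scaler0.
Qed.

Lemma deltaE n (k : nat) (j : 'I_n.+2) : (k < n.+2)%N ->
  (delta_mx 0 (inord k) : 'rV[CC]_n.+2) 0 j = (j == k :> nat)%:R.
Proof. by move=> hk; rewrite mxE eqxx /= -val_eqE /= inordK. Qed.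

Lemma ent n (v : 'rV[CC]_n.+2) (j : 'I_n.+2) : v 0 j = v 0 (inord j).
Proof. by rewrite inord_val. Qed.

Lemma sum_nat_ind (f : nat -> CC) m p k :
  \sum_(m <= i < p) f i * (k == i.+1)%:R = if (m < k <= p)%N then f k.-1 else 0.
Proof.
elim: p => [|p IH]; first by rewrite big_geq //; case: ifP => //; lia.
case: (leqP m p) => hmp.
  rewrite big_nat_recr //= IH.
  case: (eqVneq k p.+1) => [->|hk].
    rewrite /= mulr1 (_ : (m < p.+1 <= p)%N = false); last by lia.
    by rewrite (_ : (m < p.+1 <= p.+1)%N) ?add0r //; lia.
  rewrite /= mulr0 addr0.
  by rewrite (_ : (m < k <= p)%N = (m < k <= p.+1)%N) //; lia.
rewrite big_geq; last by lia.
by rewrite (_ : (m < k <= p.+1)%N = false) //; lia.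
Qed.

Lemma SE n (f : nat -> CC) m (j : 'I_n.+2) :
  (\sum_(m <= i < n.+1) f i *: vE n i) 0 j = if (m < j)%N then f (j.-1) else 0.
Proof.
rewrite summxE.
rewrite (eq_big_nat _ _ (F2 := fun i => f i * (j == i.+1 :> nat)%:R)); last first.
  by move=> i /andP[_ hi]; rewrite mxE vE_entry.
rewrite sum_nat_ind.
have := ltn_ord j.
by move=> hj; rewrite (_ : (j <= n.+1)%N) ?andbT //; lia.
Qed.

Lemma lbr_addl n (x z y : 'rV[CC]_n.+2) : lbr (x + z) y = lbr x y + lbr z y.
Proof.
rewrite /lbr -big_split; apply eq_bigr => a _; rewrite -big_split; apply eq_bigr => b _.
by rewrite mxE mulrDl scalerDl.
Qed.

Lemma lbr_scalel n c (x y : 'rV[CC]_n.+2) : lbr (c *: x) y = c *: lbr x y.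
Proof.
rewrite /lbr scaler_sumr; apply eq_bigr => a _; rewrite scaler_sumr; apply eq_bigr => b _.
by rewrite mxE scalerA mulrA.
Qed.

Lemma lbr0l n (y : 'rV[CC]_n.+2) : lbr 0 y = 0.
Proof. by have := @lbr_scalel n 0 (0 : 'rV[CC]_n.+2) y; rewrite !scale0r. Qed.

Lemma lbr_addr n (x z y : 'rV[CC]_n.+2) : lbr y (x + z) = lbr y x + lbr y z.
Proof.
rewrite /lbr -big_split; apply eq_bigr => a _; rewrite -big_split; apply eq_bigr => b _.
by rewrite mxE mulrDr scalerDl.
Qed.

Lemma lbr_scaler n c (x y : 'rV[CC]_n.+2) : lbr y (c *: x) = c *: lbr y x.
Proof.
rewrite /lbr scaler_sumr; apply eq_bigr => a _; rewrite scaler_sumr; apply eq_bigr => b _.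
by rewrite mxE scalerA mulrCA.
Qed.

Lemma lbr0r n (y : 'rV[CC]_n.+2) : lbr y 0 = 0.
Proof. by have := @lbr_scaler n 0 (0 : 'rV[CC]_n.+2) y; rewrite !scale0r. Qed.

Lemma lbr_suml n I (r : seq I) (P : pred I) (F : I -> 'rV[CC]_n.+2) y :
  lbr (\sum_(i <- r | P i) F i) y = \sum_(i <- r | P i) lbr (F i) y.
Proof. exact: (big_morph (fun x => lbr x y) (fun a b => @lbr_addl n a b y) (@lbr0l n y)). Qed.

Lemma lbr_sumr n I (r : seq I) (P : pred I) (F : I -> 'rV[CC]_n.+2) y :
  lbr y (\sum_(i <- r | P i) F i) = \sum_(i <- r | P i) lbr y (F i).
Proof. exact: (big_morph (fun x => lbr y x) (fun a b => @lbr_addr n a b y) (@lbr0r n y)). Qed.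

Lemma lbr_basis n (x y : 'rV[CC]_n.+2) :
  lbr x y = \sum_a \sum_b (x 0 a * y 0 b) *: lbr (delta_mx 0 a) (delta_mx 0 b).
Proof.
rewrite {1}(row_sum_delta x) lbr_suml; apply eq_bigr => a _.
rewrite lbr_scalel {1}(row_sum_delta y) lbr_sumr scaler_sumr; apply eq_bigr => b _.
by rewrite lbr_scaler scalerA mulrC.
Qed.

Lemma red n (D : {linear 'rV[CC]_n.+2 -> 'rV[CC]_n.+2}) :
  (forall a b : 'I_n.+2, D (lbr (delta_mx 0 a) (delta_mx 0 b)) =
     lbr (D (delta_mx 0 a)) (delta_mx 0 b) - lbr (D (delta_mx 0 b)) (delta_mx 0 a)) ->
  anti_derivation D.
Proof.
move=> H x y.
have Dx : forall v, D v = \sum_a v 0 a *: D (delta_mx 0 a).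
  by move=> v; rewrite {1}(row_sum_delta v) linear_sum; apply eq_bigr => a _; rewrite linearZ.
rewrite lbr_basis linear_sum.
rewrite (Dx x) (Dx y) !lbr_suml.
under eq_bigr do rewrite linear_sum.
under [X in _ = X - _]eq_bigr do rewrite lbr_scalel {1}(row_sum_delta y) lbr_sumr scaler_sumr.
under [X in _ = _ - X]eq_bigr do rewrite lbr_scalel {1}(row_sum_delta x) lbr_sumr scaler_sumr.
rewrite [X in _ = _ - X]exchange_big -sumrB; apply eq_bigr => a _.
rewrite -sumrB; apply eq_bigr => b _.
rewrite linearZ /= H scalerBr !lbr_scaler !scalerA; congr (_ *: _ - _ *: _).
by rewrite mulrC.
Qed.

Lemma addE n (A B : 'rV[CC]_n.+2) j : (A + B) 0 j = A 0 j + B 0 j.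
Proof. by rewrite mxE. Qed.
Lemma scE n c (A : 'rV[CC]_n.+2) j : (c *: A) 0 j = c * A 0 j.
Proof. by rewrite mxE. Qed.
Lemma oppE n (A : 'rV[CC]_n.+2) j : (- A) 0 j = - A 0 j.
Proof. by rewrite mxE. Qed.
Lemma subE n (A B : 'rV[CC]_n.+2) j : (A - B) 0 j = A 0 j - B 0 j.
Proof. by rewrite !mxE. Qed.
Lemma zeroE n j : (0 : 'rV[CC]_n.+2) 0 j = 0.
Proof. by rewrite mxE. Qed.
Lemma deltaE' n (a j : 'I_n.+2) : (delta_mx 0 a : 'rV[CC]_n.+2) 0 j = (j == a :> nat)%:R.
Proof. by rewrite mxE eqxx. Qed.

Lemma hH1 n : vH1 n = delta_mx 0 (inord 0%N). Proof. by []. Qed.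
Lemma hH2 n : vH2 n = delta_mx 0 (inord 1%N). Proof. by []. Qed.
Lemma hE1 n : vE n 1 = delta_mx 0 (inord 2%N). Proof. by []. Qed.
Lemma i0 n : ((inord 0%N : 'I_n.+2) : nat) = 0%N. Proof. by rewrite inordE. Qed.
Lemma i1 n : ((inord 1%N : 'I_n.+2) : nat) = 1%N. Proof. by rewrite inordE. Qed.
Lemma i2 n : (0 < n)%N -> ((inord 2%N : 'I_n.+2) : nat) = 2%N.
Proof. by move=> n0; rewrite inordE //; lia. Qed.

Lemma H1E n j : (vH1 n) 0 j = (j == 0%N :> nat)%:R.
Proof. by rewrite hH1 deltaE. Qed.
Lemma H2E n j : (vH2 n) 0 j = (j == 1%N :> nat)%:R.
Proof. by rewrite hH2 deltaE. Qed.
Lemma E1E n j : (0 < n)%N -> (vE n 1) 0 j = (j == 2%N :> nat)%:R.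
Proof. by move=> n0; rewrite hE1 deltaE //; lia. Qed.

Lemma lbrH1E n (x : 'rV[CC]_n.+2) j :
  (lbr x (vH1 n)) 0 j = if (3 <= j)%N then x 0 j else 0.
Proof. by rewrite hH1 lbr0E // i0. Qed.
Lemma lbrH2E n (x : 'rV[CC]_n.+2) j :
  (lbr x (vH2 n)) 0 j =
  if (j == 2%N :> nat) then x 0 j else if (3 <= j)%N then (j.-2)%:R * x 0 j else 0.
Proof. by rewrite hH2 lbr1E // i1. Qed.
Lemma lbrE1E n (x : 'rV[CC]_n.+2) j : (0 < n)%N ->
  (lbr x (vE n 1)) 0 j =
  if (j == 2%N :> nat) then - x 0 (inord 1%N) else if (4 <= j)%N then x 0 (inord j.-1) else 0.
Proof. by move=> n0; rewrite hE1 lbr2E // i2. Qed.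

Lemma Z01 n : lbr (vH1 n) (vH2 n) = 0.
Proof.
apply/rowP => j; rewrite lbrH2E zeroE H1E.
by case: ifP => j2; [rewrite (eqP j2) | case: ifP => j3; rewrite // (_ : (j == 0%N :> nat) = false) ?mulr0 //; lia].
Qed.
Lemma Z02 n : (0 < n)%N -> lbr (vH1 n) (vE n 1) = 0.
Proof.
move=> n0; apply/rowP => j; rewrite lbrE1E // zeroE !H1E i1 /= ?oppr0.
case: ifP => // j2; case: ifP => // j4; rewrite inordE; last by have := ltn_ord j; lia.
by rewrite (_ : (j.-1 == 0%N :> nat) = false) //; lia.
Qed.
Lemma L21 n : (0 < n)%N -> lbr (vE n 1) (vH2 n) = vE n 1.
Proof.
move=> n0; apply/rowP => j; rewrite lbrH2E !E1E //.
case: ifP => j2; first by rewrite j2.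
by rewrite j2; case: ifP => // j3; rewrite mulr0.
Qed.
Lemma L12 n : (0 < n)%N -> lbr (vH2 n) (vE n 1) = - vE n 1.
Proof.
move=> n0; apply/rowP => j; rewrite lbrE1E // oppE !E1E // !H2E i1 /=.
case: ifP => j2; first by rewrite /= mulr1n.
rewrite /= mulr0n oppr0; case: ifP => // j4; rewrite inordE; last by have := ltn_ord j; lia.
by rewrite (_ : (j.-1 == 1%N :> nat) = false) //; lia.
Qed.

Lemma dconv n (c : 'I_n.+2) k : (c : nat) = k ->
  (delta_mx 0 c : 'rV[CC]_n.+2) = delta_mx 0 (inord k).
Proof. by move=> h; rewrite -h inord_val. Qed.

Arguments dconv {n c k}.

Lemma KER n (D : {linear 'rV[CC]_n.+2 -> 'rV[CC]_n.+2})
  (hE : forall i : nat, (2 <= i <= n)%N -> D (vE n i) = 0) (v : 'rV[CC]_n.+2) :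
  (forall j : 'I_n.+2, (j <= 2)%N -> v 0 j = 0) -> D v = 0.
Proof.
move=> hv; rewrite (row_sum_delta v) linear_sum big1 // => j _.
rewrite linearZ /=; have jo := ltn_ord j.
case: (leqP j 2) => hj; first by rewrite hv // scale0r.
rewrite (_ : delta_mx 0 j = vE n j.-1) ?hE ?scaler0 //; first lia.
by rewrite /vE prednK ?inord_val //; lia.
Qed.

Arguments KER {n D}.

Lemma LOW n (a b j : 'I_n.+2) : (0 < n)%N -> (j <= 2)%N ->
  ~~ (((a : nat) == 1%N) && ((b : nat) == 2%N)) ->
  ~~ (((a : nat) == 2%N) && ((b : nat) == 1%N)) ->
  (lbr (delta_mx 0 a) (delta_mx 0 b)) 0 j = 0.
Proof.
move=> n0 hj h12 h21.
case: (leqP 3 b) => hb; first by rewrite lbrbig // zeroE.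
have [b0|[b1|b2]] : (b : nat) = 0%N \/ (b : nat) = 1%N \/ (b : nat) = 2%N by lia.
- by rewrite lbr0E //; case: ifP => //; lia.
- rewrite lbr1E // deltaE'; case: ifP => j2.
    by rewrite (_ : (j == a :> nat) = false) //; move: h21; rewrite b1; lia.
  by case: ifP => //; lia.
- rewrite lbr2E // deltaE' i1; case: ifP => j2.
    by rewrite (_ : (1%N == a :> nat) = false) ?oppr0 //; move: h12; rewrite b2; lia.
  by case: ifP => //; lia.
Qed.

Theorem mainTheorem10 (n : nat) (hn : (4 <= n)%N)
    (D : {linear 'rV[CC]_n.+2 -> 'rV[CC]_n.+2}) :
  anti_derivation D <->
  exists (beta : nat -> CC) (gamma1 gamma2 : CC),
    [/\ D (vH1 n) = gamma1 *: vH1 n + \sum_(2 <= i < n.+1) beta i.+1 *: vE n i,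
        D (vH2 n) = gamma2 *: vH1 n + beta 2%N *: vE n 1
                    + \sum_(2 <= i < n.+1) ((i.-1)%:R * beta i.+1) *: vE n i,
        D (vE n 1) = beta 1%N *: vE n 1 + \sum_(3 <= i < n.+1) beta i *: vE n i
      & forall i : nat, (2 <= i <= n)%N -> D (vE n i) = 0].
Proof.
have n0 : (0 < n)%N by lia.
split.
  move=> H.
  set X := D (vH1 n); set Y := D (vH2 n); set Z := D (vE n 1).
  have DE : forall i, (2 <= i <= n)%N -> D (vE n i) = 0.
    move=> i hi.
    have h1 := H (vH1 n) (vE n i); have h2 := H (vE n i) (vH1 n).
    have L0 : forall x, lbr x (vE n i) = 0 by move=> x; rewrite /vE lbrbig // inordE; lia.
    rewrite L0 linear0 L0 sub0r in h1.
    have e : lbr (vE n i) (vH1 n) = vE n i.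
      apply/rowP => j; rewrite lbrH1E vE_entry; last by lia.
      by case: ifP => // hj; rewrite (_ : (j == i.+1 :> nat) = false) //; lia.
    rewrite e L0 subr0 in h2; rewrite h2.
    by apply/eqP; rewrite -oppr_eq0 -h1.
  have EA : lbr X (vE n 1) = lbr Z (vH1 n).
    by apply/eqP; rewrite -subr_eq0 -H Z02 // linear0.
  have EB : lbr X (vH2 n) = lbr Y (vH1 n).
    by apply/eqP; rewrite -subr_eq0 -H Z01 linear0.
  have EC : Z = lbr Z (vH2 n) - lbr Y (vE n 1).
    by rewrite -H L21.
  have A k : (k < n.+2)%N -> (if k == 2%N then - X 0 (inord 1%N) else if (4 <= k)%N then X 0 (inord k.-1) else 0)
     = (if (3 <= k)%N then Z 0 (inord k) else 0).
    by move=> hk; have := congr1 (fun v : 'rV[CC]_n.+2 => v 0 (inord k)) EA; rewrite /= lbrE1E // lbrH1E !inordE.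
  have B k : (k < n.+2)%N -> (if k == 2%N then X 0 (inord k) else if (3 <= k)%N then (k.-2)%:R * X 0 (inord k) else 0)
     = (if (3 <= k)%N then Y 0 (inord k) else 0).
    by move=> hk; have := congr1 (fun v : 'rV[CC]_n.+2 => v 0 (inord k)) EB; rewrite /= lbrH2E // lbrH1E !inordE.
  have C k : (k < n.+2)%N -> Z 0 (inord k) =
     (if k == 2%N then Z 0 (inord k) else if (3 <= k)%N then (k.-2)%:R * Z 0 (inord k) else 0) -
     (if k == 2%N then - Y 0 (inord 1%N) else if (4 <= k)%N then Y 0 (inord k.-1) else 0).
    by move=> hk; have := congr1 (fun v : 'rV[CC]_n.+2 => v 0 (inord k)) EC; rewrite /= subE lbrH2E lbrE1E // !inordE.
  have fX1 : X 0 (inord 1%N) = 0.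
    by have := A 2%N ltac:(lia); rewrite /= => /eqP; rewrite oppr_eq0 => /eqP.
  have fZ3 : Z 0 (inord 3%N) = 0.
    by have := A 3%N ltac:(lia); rewrite /= => <-.
  have fZk k : (4 <= k)%N -> (k < n.+2)%N -> Z 0 (inord k) = X 0 (inord k.-1).
    move=> h4 hk; have := A k hk.
    rewrite (_ : (k == 2%N) = false); last by lia.
    by rewrite h4 (_ : (3 <= k)%N) //; lia.
  have fX2 : X 0 (inord 2%N) = 0.
    by have := B 2%N ltac:(lia); rewrite /=.
  have fYk k : (3 <= k)%N -> (k < n.+2)%N -> Y 0 (inord k) = (k.-2)%:R * X 0 (inord k).
    move=> h3 hk; have := B k hk.
    by rewrite (_ : (k == 2%N) = false) ?h3 //; lia.
  have fZ0 : Z 0 (inord 0%N) = 0.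
    by have := C 0%N ltac:(lia); rewrite /= subr0.
  have fZ1 : Z 0 (inord 1%N) = 0.
    by have := C 1%N ltac:(lia); rewrite /= subr0.
  have fY1 : Y 0 (inord 1%N) = 0.
    have := C 2%N ltac:(lia); rewrite /= opprK => h.
    have e : Y 0 (inord 1%N) = (Z 0 (inord 2%N) + Y 0 (inord 1%N)) - Z 0 (inord 2%N).
      by rewrite addrAC subrr add0r.
    by rewrite e -h subrr.
  pose beta k := if k == 1%N then Z 0 (inord 2%N) else if k == 2%N then Y 0 (inord 2%N)
                 else X 0 (inord k).
  exists beta, (X 0 (inord 0%N)), (Y 0 (inord 0%N)); split => //.
  - apply/rowP => j; rewrite (ent _ X j) addE scE H1E SE.
    move: (nat_of_ord j) (ltn_ord j) => k hk.
    case: k hk => [|[|[|k]]] hk /=.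
    + by rewrite mulr1n mulr1 addr0.
    + by rewrite fX1 mulr0n mulr0 addr0.
    + by rewrite fX2 mulr0n mulr0 addr0.
    + by rewrite mulr0n mulr0 add0r /beta.
  - apply/rowP => j; rewrite (ent _ Y j) !addE !scE H1E E1E // SE.
    move: (nat_of_ord j) (ltn_ord j) => k hk.
    case: k hk => [|[|[|k]]] hk /=.
    + by rewrite mulr1n mulr1 mulr0n mulr0 !addr0.
    + by rewrite fY1 !mulr0n !mulr0 !addr0.
    + by rewrite !mulr0n mulr0 mulr1n mulr1 add0r addr0 /beta.
    + by rewrite !mulr0n !mulr0 !add0r /beta /= fYk.
  - apply/rowP => j; rewrite (ent _ Z j) !addE !scE E1E // SE.
    move: (nat_of_ord j) (ltn_ord j) => k hk.
    case: k hk => [|[|[|[|k]]]] hk /=.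
    + by rewrite fZ0 mulr0n mulr0 addr0.
    + by rewrite fZ1 mulr0n mulr0 addr0.
    + by rewrite mulr1n mulr1 addr0 /beta.
    + by rewrite fZ3 mulr0n mulr0 addr0.
    + by rewrite mulr0n mulr0 add0r /beta /= fZk.
move=> [beta [g1 [g2 [hX hY hZ hE]]]].
have eX k : (k < n.+2)%N -> (D (vH1 n)) 0 (inord k) =
    g1 * (k == 0%N)%:R + (if (2 < k)%N then beta k.-1.+1 else 0).
  by move=> hk; rewrite hX addE scE H1E SE inordE.
have eY k : (k < n.+2)%N -> (D (vH2 n)) 0 (inord k) =
    g2 * (k == 0%N)%:R + beta 2%N * (k == 2%N)%:R
    + (if (2 < k)%N then (k.-1.-1)%:R * beta k.-1.+1 else 0).
  by move=> hk; rewrite hY !addE !scE H1E E1E // SE inordE.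
have eZ k : (k < n.+2)%N -> (D (vE n 1)) 0 (inord k) =
    beta 1%N * (k == 2%N)%:R + (if (3 < k)%N then beta k.-1 else 0).
  by move=> hk; rewrite hZ !addE !scE E1E // SE inordE.
have EA : lbr (D (vH1 n)) (vE n 1) = lbr (D (vE n 1)) (vH1 n).
  apply/rowP => j; rewrite lbrE1E // lbrH1E (ent _ (D (vE n 1)) j).
  move: (nat_of_ord j) (ltn_ord j) => k hk.
  case: k hk => [|[|[|[|k]]]] hk //=.
  + by rewrite eX //= mulr0n mulr0 addr0 oppr0.
  + by rewrite eZ //= mulr0n mulr0 addr0.
  + by rewrite eX ?eZ //= ?mulr0n ?mulr0 ?add0r //; lia.
have EB : lbr (D (vH1 n)) (vH2 n) = lbr (D (vH2 n)) (vH1 n).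
  apply/rowP => j; rewrite lbrH2E lbrH1E (ent _ (D (vH1 n)) j) (ent _ (D (vH2 n)) j).
  move: (nat_of_ord j) (ltn_ord j) => k hk.
  case: k hk => [|[|[|k]]] hk //=.
  + by rewrite eX //= mulr0n mulr0 addr0.
  + by rewrite eX ?eY //=; ring.
have EC : D (vE n 1) = lbr (D (vE n 1)) (vH2 n) - lbr (D (vH2 n)) (vE n 1).
  apply/rowP => j; rewrite subE lbrH2E lbrE1E // (ent _ (D (vE n 1)) j).
  move: (nat_of_ord j) (ltn_ord j) => k hk.
  case: k hk => [|[|[|[|k]]]] hk //=.
  + by rewrite eZ //= mulr0n mulr0 addr0 subr0.
  + by rewrite eZ //= mulr0n mulr0 addr0 subr0.
  + by rewrite eY //= !mulr0n !mulr0 !addr0 oppr0 subr0.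
  + by rewrite subr0 mul1r.
  + rewrite eZ ?eY //=; [ring | lia].
have Dd (c : 'I_n.+2) : (3 <= c)%N -> D (delta_mx 0 c) = 0.
  move=> hc; have co := ltn_ord c.
  rewrite (_ : delta_mx 0 c = vE n c.-1) ?hE //; first lia.
  by rewrite /vE prednK ?inord_val //; lia.
apply: red => a b.
have ao := ltn_ord a; have bo := ltn_ord b.
case: (boolP ((((a : nat) == 1%N) && ((b : nat) == 2%N)) || (((a : nat) == 2%N) && ((b : nat) == 1%N)))) => sp.
  case/orP: sp => /andP[/eqP ha /eqP hb].
    rewrite (dconv ha) (dconv hb) -hH2 -hE1 L12 // linearN /= {1}EC opprB.
    by [].
  by rewrite (dconv ha) (dconv hb) -hH2 -hE1 L21 // {1}EC.
rewrite (KER hE); last first.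
  move=> j hj; apply: LOW => //; apply/negP => h; move: sp; rewrite h ?orbT //.
case: (leqP 3 a) => ha; first by rewrite (Dd a) // lbr0l lbrbig // subrr.
case: (leqP 3 b) => hb; first by rewrite (Dd b) // lbr0l lbrbig // subrr.
case: (eqVneq a b) => [->|nab]; first by rewrite subrr.
have [a0|[a1|a2]] : (a : nat) = 0%N \/ (a : nat) = 1%N \/ (a : nat) = 2%N by lia.
all: have [b0|[b1|b2]] : (b : nat) = 0%N \/ (b : nat) = 1%N \/ (b : nat) = 2%N by lia.
all: rewrite ?(dconv a0) ?(dconv a1) ?(dconv a2) ?(dconv b0) ?(dconv b1) ?(dconv b2)
    -?hH1 -?hH2 -?hE1.
all: try by move: nab; rewrite -val_eqE /= ?a0 ?a1 ?a2 ?b0 ?b1 ?b2.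
all: try by move: sp; rewrite ?a0 ?a1 ?a2 ?b0 ?b1 ?b2.
all: by rewrite ?EA ?EB subrr.
Qed.
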